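(* Let $R$ be a commutative Noetherian ring, $n$ a non-negative integer and $L$ an $R$-module with $\dim L\ge n$. If $L'$ is a submodule of $L$ with $\dim L/L'\ge n$, then $$\bigcap_{\mathfrak p\in(\operatorname{Ass}_R L)_{\ge n}}\mathfrak p\ \subseteq\ \bigcap_{\mathfrak p\in(\operatorname{Ass}_R L/L')_{\ge n}}\mathfrak p.$$
   Context: For an $R$-module $L$, $\dim L=\sup\{\dim R/\mathfrak p:\mathfrak p\in\operatorname{Supp}L\}$. For a subset $T\subseteq\operatorname{Spec}R$, $(T)_{\ge n}=\{\mathfrak p\in T:\dim R/\mathfrak p\ge n\}$. *)

(* Defs.v *)
From HB Require Import structures.
From mathcomp Require Import all_boot all_algebra.
Set Implicit Arguments. Unset Strict Implicit. Unset Printing Implicit Defensive.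
Import GRing.Theory.
Local Open Scope ring_scope.

Section CommAlg.
Variable R : comPzRingType.

Definition is_ideal (I : R -> Prop) : Prop :=
  I 0 /\ (forall a b, I a -> I b -> I (a + b)) /\ (forall r a, I a -> I (r * a)).

Definition is_prime_ideal (P : R -> Prop) : Prop :=
  is_ideal P /\ ~ P 1 /\ (forall a b, P (a * b) -> P a \/ P b).

Definition noetherian_ring : Prop :=
  forall I : nat -> R -> Prop,
    (forall k, is_ideal (I k)) ->
    (forall k x, I k x -> I k.+1 x) ->
    exists N, forall m, (N <= m)%N -> forall x, I m x <-> I N x.

(* dim R/p >= n : there is a chain of primes p = p_0 ⊊ p_1 ⊊ ... ⊊ p_n. *)
Definition dim_quot_ge (p : R -> Prop) (n : nat) : Prop :=
  exists c : nat -> R -> Prop,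
    (forall x, c 0%N x <-> p x) /\
    (forall i, (i <= n)%N -> is_prime_ideal (c i)) /\
    (forall i, (i < n)%N ->
       (forall x, c i x -> c i.+1 x) /\ exists x, c i.+1 x /\ ~ c i x).

Variable V : lmodType R.

Definition is_submodule (N : V -> Prop) : Prop :=
  N 0 /\ (forall u v, N u -> N v -> N (u + v)) /\ (forall r v, N v -> N (r *: v)).

(* Everything below concerns the quotient module V / N for a submodule N;
   taking N = {0} gives the module V itself. *)

(* p ∈ Ass(V/N): p is prime and p = ann(x + N) for some x. *)
Definition Ass_quot (N : V -> Prop) (p : R -> Prop) : Prop :=
  is_prime_ideal p /\ exists x : V, forall r, p r <-> N (r *: x).

(* p ∈ Supp(V/N): p is prime and (V/N)_p <> 0, i.e. some x/1 is nonzero in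
   the localization: no t ∉ p kills the class of x. *)
Definition Supp_quot (N : V -> Prop) (p : R -> Prop) : Prop :=
  is_prime_ideal p /\ exists x : V, forall t, ~ p t -> ~ N (t *: x).

(* dim (V/N) >= n  (dim = sup over the support of dim R/p) *)
Definition dim_quot_ge_mod (N : V -> Prop) (n : nat) : Prop :=
  exists p, Supp_quot N p /\ dim_quot_ge p n.

Definition zero_sub : V -> Prop := fun v => v = 0.

End CommAlg.

(* Main.v *)
Require Import Defs.
From HB Require Import structures.
From mathcomp Require Import all_boot all_algebra.
From Stdlib Require Import Classical ClassicalEpsilon.
Import GRing.Theory.
Local Open Scope ring_scope.

Lemma max_exists (R : comPzRingType) (S : R -> Prop) (K : R -> R -> Prop) (c1 : R) :
  noetherian_ring R -> (forall c, is_ideal (K c)) -> S c1 ->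
  exists c0, S c0 /\ forall c, S c -> (forall a, K c0 a -> K c a) ->
     forall a, K c a -> K c0 a.
Proof.
move=> HN HK S1; apply: NNPP => Hno.
have step : forall c, exists c', S c -> S c' /\ (forall a, K c a -> K c' a) /\
    exists a, K c' a /\ ~ K c a.
  move=> c; case: (classic (S c)) => Sc; last by exists c.
  apply: NNPP => Hn; apply: Hno; exists c; split => // c' Sc' Hsub.
  move=> a Ka; apply: NNPP => nK; apply: Hn; exists c' => _.
  by split => //; split => //; exists a.
have [g Hg] : exists g : R -> R, forall c, S c -> S (g c) /\
   (forall a, K c a -> K (g c) a) /\ exists a, K (g c) a /\ ~ K c a.
  exists (fun c => proj1_sig (constructive_indefinite_description _ (step c))).
  by move=> c; case: (constructive_indefinite_description _ (step c)) => /= c' H; apply: H.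
pose f k := iter k g c1.
have Sf : forall k, S (f k).
  by elim=> [|k IH] //=; case: (Hg _ IH).
have [N HNN] := HN (fun k => K (f k)) (fun k => HK _)
  (fun k x => proj1 (proj2 (Hg _ (Sf k))) x).
have [_ [_ [a [Ka nKa]]]] := Hg _ (Sf N).
apply: nKa; have := HNN N.+1 (leqnSn N) a; rewrite /f /=; by case=> H _; apply: H.
Qed.

Lemma exist_q (R : comPzRingType) (V : lmodType R) (p : R -> Prop) (x : V) :
  noetherian_ring R -> is_prime_ideal p -> (forall a, a *: x = 0 -> p a) ->
  exists y : V, is_prime_ideal (fun a => a *: y = 0) /\
     (forall a, a *: y = 0 -> p a).
Proof.
move=> HN [[p0 [pD pM]] [p1 pP]] Hx.
pose K c a := (a * c) *: x = 0.
pose S c := forall a, K c a -> p a.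
have HK : forall c, is_ideal (K c).
  move=> c; rewrite /K; split; first by rewrite mul0r scale0r.
  split; first by move=> a b Ha Hb; rewrite mulrDl scalerDl Ha Hb addr0.
  by move=> r a Ha; rewrite -mulrA -scalerA Ha scaler0.
have S1 : S 1 by move=> a; rewrite /K mulr1; apply: Hx.
have [c0 [Sc0 Hmax]] := @max_exists R S K 1 HN HK S1.
have E : forall a c, a *: (c *: x) = (a * c) *: x by move=> a c; rewrite scalerA.
have sat : forall t z, ~ p t -> K c0 (t * z) -> K c0 z.
  move=> t z nt Htz.
  have St : S (t * c0).
    move=> u; rewrite /K mulrA => Hu.
    by case: (pP _ _ (Sc0 _ Hu)) => // /nt.
  apply: (Hmax _ St).
    by move=> u; rewrite /K => Hu; rewrite mulrA (mulrC u) -mulrA -scalerA Hu scaler0.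
  by rewrite /K mulrA (mulrC z).
exists (c0 *: x); split; last by move=> a; rewrite E; apply: Sc0.
split.
  split; first by rewrite scale0r.
  split; first by move=> a b Ha Hb; rewrite scalerDl Ha Hb addr0.
  by move=> r a Ha; rewrite -scalerA Ha scaler0.
split; first by move=> H; apply: p1; apply: Sc0; rewrite /K mul1r; rewrite scale1r in H.
move=> a b; rewrite !E => Hab.
case: (classic (K c0 a)) => Ha; first by left.
right.
have Sa : S (a * c0).
  move=> t; rewrite /K mulrA => Ht; apply: NNPP => nt; apply: Ha.
  by apply: (sat t) => //.
have := Hmax _ Sa.
have sub : forall u, K c0 u -> K (a * c0) u.
  by move=> u; rewrite /K => Hu; rewrite mulrA (mulrC u) -mulrA -scalerA Hu scaler0.
move=> /(_ sub b); apply.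
by rewrite /K mulrA (mulrC b).
Qed.

Theorem lemma2p5 (R : comPzRingType) (V : lmodType R) (n : nat)
    (L' : V -> Prop) :
  noetherian_ring R ->
  dim_quot_ge_mod (@zero_sub R V) n ->
  is_submodule L' ->
  dim_quot_ge_mod L' n ->
  forall r : R,
    (forall p, Ass_quot (@zero_sub R V) p -> dim_quot_ge p n -> p r) ->
    (forall p, Ass_quot L' p -> dim_quot_ge p n -> p r).
Proof.
move=> HN _ [L0 _] _ r Hr p [pp [x Hx]] [c [c0 [cP cS]]].
apply: NNPP => nr.
have Hx0 : forall a, a *: x = 0 -> p a by move=> a Ha; apply/Hx; rewrite Ha.
have [y [qP qp]] := @exist_q R V p x HN pp Hx0.
apply: nr; apply: (qp); apply: (Hr (fun a => a *: y = 0)).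
  by split => //; exists y.
exists (fun i => if i is 0%N then (fun a => a *: y = 0) else c i); split => //.
split; first by case=> [|i] // Hi; apply: cP.
case=> [|i] Hi; last by apply: cS.
have [Hs [z [z1 z0]]] := cS 0%N Hi; split.
  by move=> u /qp /c0 /Hs.
exists z; split => // Hz; apply: z0; apply/c0; apply: (qp); exact: Hz.
Qed.
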